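(* For any $\mathfrak{Q}$-distributors $\phi,\psi$ from $X$ to $Y$ between $\mathfrak{Q}$-preordered $\mathfrak{Q}$-subsets, $$\phi=\psi\iff\phi_{\uparrow}=\psi_{\uparrow}\iff\phi^{\downarrow}=\psi^{\downarrow}\iff\phi^{*}=\psi^{*}\iff\phi^{\dagger}=\psi^{\dagger}.$$
   Context: $(\mathfrak{Q},\&,e)$ is a non-trivial unital quantale (complete lattice with associative multiplication with unit $e$ preserving joins in each variable, $\bot<e$), implications $p\& q\le r\iff p\le r/ q\iff q\le p\backslash r$, $\mathcal{D}\mathfrak{Q}(p,q)=\{u\mid (u/ p)\& p=u=q\&(q\backslash u)\}$. A $\mathfrak{Q}$-subset is a set with $|\cdot|\colon X\to\mathfrak{Q}$; $\mathbf{1}_q$ is $\{*\}$ with $|*|=q$. A $\mathfrak{Q}$-relation from $X$ to $Y$ is a map $\phi\colon X\times Y\to\mathfrak{Q}$ with $\phi(x,y)\in\mathcal{D}\mathfrak{Q}(|x|,|y|)$, ordered pointwise; composition $(\psi\circ\phi)(x,z)=\bigvee_y(\psi(y,z)/|y|)\&\phi(x,y)$; $\xi\swarrow\phi$ is the largest $\psi'$ with $\psi'\circ\phi\le\xi$ and $\psi\searrow\xi$ the largest $\phi'$ with $\psi\circ\phi'\le\xi$. A $\mathfrak{Q}$-preordered $\mathfrak{Q}$-subset is a $\mathfrak{Q}$-subset $X$ with a $\mathfrak{Q}$-relation $1_X^{\natural}$ on $X$ with $\mathrm{id}_X\le 1_X^{\natural}$ ($\mathrm{id}_X(x,x)=|x|$,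 else $\bot$) and $1_X^{\natural}\circ 1_X^{\natural}\le 1_X^{\natural}$. A $\mathfrak{Q}$-distributor from $X$ to $Y$ is a $\mathfrak{Q}$-relation $\phi$ with $1_Y^{\natural}\circ\phi\circ 1_X^{\natural}\le\phi$. $\mathsf{P}X$ is the set of $\mathfrak{Q}$-relations $\mu$ from $X$ to some $\mathbf{1}_q$ with $\mu\circ 1_X^{\natural}\le\mu$; $\mathsf{P}^{\dagger}X$ is the set of $\mathfrak{Q}$-relations $\lambda$ from some $\mathbf{1}_q$ to $X$ with $1_X^{\natural}\circ\lambda\le\lambda$. For a $\mathfrak{Q}$-distributor $\phi$ from $X$ to $Y$: $\phi_{\uparrow}\colon\mathsf{P}X\to\mathsf{P}^{\dagger}Y$, $\mu\mapsto\phi\swarrow\mu$; $\phi^{\downarrow}\colon\mathsf{P}^{\dagger}Y\to\mathsf{P}X$, $\lambda'\mapsto\lambda'\searrow\phi$; $\phi^{*}\colon\mathsf{P}Y\to\mathsf{P}X$, $\mu'\mapsto\mu'\circ\phi$; $\phi^{\dagger}\colon\mathsf{P}^{\dagger}X\to\mathsf{P}^{\dagger}Y$, $\lambda\mapsto\phi\circ\lambda$. *)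

(* Defs.v *)
Set Implicit Arguments.
Unset Strict Implicit.

Record Quantale := {
  qcar :> Type;
  qle : qcar -> qcar -> Prop;
  qsup : (qcar -> Prop) -> qcar;
  qmul : qcar -> qcar -> qcar;
  qe : qcar;
  qle_refl : forall a, qle a a;
  qle_trans : forall a b c, qle a b -> qle b c -> qle a c;
  qle_antisym : forall a b, qle a b -> qle b a -> a = b;
  qsup_ub : forall (S : qcar -> Prop) a, S a -> qle a (qsup S);
  qsup_least : forall (S : qcar -> Prop) b,
      (forall a, S a -> qle a b) -> qle (qsup S) b;
  qmul_assoc : forall a b c, qmul a (qmul b c) = qmul (qmul a b) c;
  qmul_e_l : forall a, qmul qe a = a;
  qmul_e_r : forall a, qmul a qe = a;
  qmul_sup_l : forall (S : qcar -> Prop) a,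
      qmul (qsup S) a = qsup (fun v => exists b, S b /\ v = qmul b a);
  qmul_sup_r : forall (S : qcar -> Prop) a,
      qmul a (qsup S) = qsup (fun v => exists b, S b /\ v = qmul a b);
  qbot_lt_e : qsup (fun _ => False) <> qe
}.

Section Q.
Variable Q : Quantale.

Definition qbot : Q := qsup (fun _ => False).

Definition rdiv (r q : Q) : Q := qsup (fun p => qle (qmul p q) r).
Definition ldiv (p r : Q) : Q := qsup (fun q => qle (qmul p q) r).

Definition inDQ (p q u : Q) : Prop :=
  qmul (rdiv u p) p = u /\ u = qmul q (ldiv q u).

Record QSubset := { qs_car :> Type; qs_val : qs_car -> Q }.

Definition one (q : Q) : QSubset := {| qs_car := unit; qs_val := fun _ => q |}.

Definition QRelType (X Y : QSubset) := X -> Y -> Q.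

Definition is_Qrel (X Y : QSubset) (phi : QRelType X Y) : Prop :=
  forall x y, inDQ (qs_val x) (qs_val y) (phi x y).

Definition rle (X Y : QSubset) (phi psi : QRelType X Y) : Prop :=
  forall x y, qle (phi x y) (psi x y).

Definition compose (X Y Z : QSubset) (psi : QRelType Y Z) (phi : QRelType X Y)
  : QRelType X Z :=
  fun x z => qsup (fun v => exists y : Y,
                      v = qmul (rdiv (psi y z) (qs_val y)) (phi x y)).

(* id_X(x,x) = |x|, id_X(x,x') = bottom otherwise *)
Definition idrel (X : QSubset) : QRelType X X :=
  fun x x' => qsup (fun v => x = x' /\ v = qs_val x).

(* xi ↙ phi : the largest Q-relation psi' (from Y to Z) with psi' o phi <= xi,
   for phi : X -> Y, xi : X -> Z; realised as the pointwise join of all such. *)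
Definition lift_left (X Y Z : QSubset) (xi : QRelType X Z) (phi : QRelType X Y)
  : QRelType Y Z :=
  fun y z => qsup (fun v => exists psi' : QRelType Y Z,
      is_Qrel psi' /\ rle (compose psi' phi) xi /\ v = psi' y z).

(* psi ↘ xi : the largest Q-relation phi' (from X to Y) with psi o phi' <= xi,
   for psi : Y -> Z, xi : X -> Z. *)
Definition lift_right (X Y Z : QSubset) (psi : QRelType Y Z) (xi : QRelType X Z)
  : QRelType X Y :=
  fun x y => qsup (fun v => exists phi' : QRelType X Y,
      is_Qrel phi' /\ rle (compose psi phi') xi /\ v = phi' x y).

Record QPreSubset := {
  qp_sub :> QSubset;
  qp_hom : QRelType qp_sub qp_sub;
  qp_hom_rel : is_Qrel qp_hom;
  qp_refl : rle (@idrel qp_sub) qp_hom;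
  qp_trans : rle (compose qp_hom qp_hom) qp_hom
}.
Arguments qp_hom : clear implicits.

Definition is_distributor (X Y : QPreSubset) (phi : QRelType X Y) : Prop :=
  is_Qrel phi /\ rle (compose (qp_hom Y) (compose phi (qp_hom X))) phi.

Definition inP (X : QPreSubset) (q : Q) (mu : QRelType X (one q)) : Prop :=
  is_Qrel mu /\ rle (compose mu (qp_hom X)) mu.

Definition inPd (X : QPreSubset) (q : Q) (lam : QRelType (one q) X) : Prop :=
  is_Qrel lam /\ rle (compose (qp_hom X) lam) lam.

Definition up_map (X Y : QPreSubset) (phi : QRelType X Y) (q : Q)
  (mu : QRelType X (one q)) : QRelType (one q) Y :=
  lift_left phi mu.

Definition down_map (X Y : QPreSubset) (phi : QRelType X Y) (q : Q)
  (lam : QRelType (one q) Y) : QRelType X (one q) :=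
  lift_right lam phi.

Definition star_map (X Y : QPreSubset) (phi : QRelType X Y) (q : Q)
  (mu : QRelType Y (one q)) : QRelType X (one q) :=
  compose mu phi.

Definition dagger_map (X Y : QPreSubset) (phi : QRelType X Y) (q : Q)
  (lam : QRelType (one q) X) : QRelType (one q) Y :=
  compose phi lam.

End Q.

(* Main.v *)
Require Import Defs.
From Stdlib Require Import FunctionalExtensionality Setoid.

Section Aux.
Variable Q : Quantale.

Lemma sup_ge (S : Q -> Prop) (a b : Q) : S b -> qle a b -> qle a (qsup S).
Proof. intros Hb Hab. eapply qle_trans; [exact Hab| apply qsup_ub; exact Hb]. Qed.

Lemma mul_mono_l (a b c : Q) : qle a b -> qle (qmul a c) (qmul b c).
Proof.
  intros H.
  assert (E : qsup (fun v => v = a \/ v = b) = b).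
  { apply qle_antisym.
    - apply qsup_least. intros v [->| ->]; [exact H| apply qle_refl].
    - apply qsup_ub. right; reflexivity. }
  rewrite <- E. rewrite qmul_sup_l.
  apply qsup_ub. exists a. split; [left; reflexivity| reflexivity].
Qed.

Lemma mul_mono_r (a b c : Q) : qle a b -> qle (qmul c a) (qmul c b).
Proof.
  intros H.
  assert (E : qsup (fun v => v = a \/ v = b) = b).
  { apply qle_antisym.
    - apply qsup_least. intros v [->| ->]; [exact H| apply qle_refl].
    - apply qsup_ub. right; reflexivity. }
  rewrite <- E. rewrite qmul_sup_r.
  apply qsup_ub. exists a. split; [left; reflexivity| reflexivity].
Qed.

Lemma rdiv_cancel (r q : Q) : qle (qmul (rdiv r q) q) r.
Proof.
  unfold rdiv. rewrite qmul_sup_l. apply qsup_least.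
  intros v [b [Hb ->]]. exact Hb.
Qed.

Lemma rdiv_intro (p q r : Q) : qle (qmul p q) r -> qle p (rdiv r q).
Proof. intros H. apply qsup_ub. exact H. Qed.

Lemma rdiv_mono (r r' q : Q) : qle r r' -> qle (rdiv r q) (rdiv r' q).
Proof.
  intros H. apply rdiv_intro. eapply qle_trans; [apply rdiv_cancel| exact H].
Qed.

Lemma e_le_div (a : Q) : qle (qe Q) (rdiv a a).
Proof. apply rdiv_intro. rewrite qmul_e_l. apply qle_refl. Qed.

Lemma hom_diag (X : QPreSubset Q) (x : X) : qle (qs_val x) (@qp_hom _ X x x).
Proof.
  eapply qle_trans; [| apply (@qp_refl _ X)].
  unfold idrel. apply qsup_ub. split; reflexivity.
Qed.

Lemma compose_mono (X Y Z : QSubset Q) (psi psi' : QRelType Y Z)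
  (phi phi' : QRelType X Y) :
  rle psi psi' -> rle phi phi' -> rle (compose psi phi) (compose psi' phi').
Proof.
  intros H1 H2 x z. unfold compose. apply qsup_least.
  intros v [y ->]. eapply sup_ge. exists y. reflexivity.
  eapply qle_trans; [apply mul_mono_l, rdiv_mono, H1| apply mul_mono_r, H2].
Qed.

Lemma hom_left (X : QSubset Q) (Y : QPreSubset Q) (xi : QRelType X Y) :
  rle xi (compose (@qp_hom _ Y) xi).
Proof.
  intros x y. unfold compose. eapply sup_ge. exists y. reflexivity.
  rewrite <- (qmul_e_l (xi x y)) at 1. apply mul_mono_l.
  eapply qle_trans; [apply e_le_div| apply rdiv_mono, hom_diag].
Qed.

Lemma hom_right (X : QPreSubset Q) (Y : QSubset Q) (xi : QRelType X Y) :
  is_Qrel xi -> rle xi (compose xi (@qp_hom _ X)).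
Proof.
  intros Hq x y. unfold compose. eapply sup_ge. exists x. reflexivity.
  destruct (Hq x y) as [E _]. rewrite <- E at 1. apply mul_mono_r, hom_diag.
Qed.

Lemma rle_trans (X Y : QSubset Q) (a b c : QRelType X Y) :
  rle a b -> rle b c -> rle a c.
Proof. intros H1 H2 x y. eapply qle_trans; [apply H1| apply H2]. Qed.

Lemma rle_refl (X Y : QSubset Q) (a : QRelType X Y) : rle a a.
Proof. intros x y; apply qle_refl. Qed.

Lemma dist_left (X Y : QPreSubset Q) (phi : QRelType X Y) :
  is_distributor phi -> forall x y, compose (@qp_hom _ Y) phi x y = phi x y.
Proof.
  intros [Hq Hd] x y. apply qle_antisym; [| apply hom_left].
  revert x y. eapply rle_trans; [| exact Hd].
  apply compose_mono; [apply rle_refl| apply hom_right, Hq].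
Qed.

Lemma dist_right (X Y : QPreSubset Q) (phi : QRelType X Y) :
  is_distributor phi -> forall x y, compose phi (@qp_hom _ X) x y = phi x y.
Proof.
  intros [Hq Hd] x y. apply qle_antisym; [| apply hom_right, Hq].
  revert x y. eapply rle_trans; [apply hom_left| exact Hd].
Qed.

Lemma rel_ext (X Y : QSubset Q) (phi psi : QRelType X Y) :
  (forall x y, phi x y = psi x y) -> phi = psi.
Proof.
  intros H. apply functional_extensionality; intro x.
  apply functional_extensionality; intro y. apply H.
Qed.

Section Fix.
Variables X Y : QPreSubset Q.
Variables phi psi : QRelType X Y.
Hypothesis Hphi : is_distributor phi.
Hypothesis Hpsi : is_distributor psi.

Lemma star_eq :
  (forall (q : Q) (mu : QRelType Y (one q)), inP mu ->
        star_map phi mu = star_map psi mu) -> phi = psi.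
Proof.
  intros H. apply rel_ext. intros x y0.
  set (mu := (fun y (_ : unit) => @qp_hom _ Y y y0) : QRelType Y (one (qs_val y0))).
  assert (Hmu : inP mu).
  { split. - intros y u. exact (@qp_hom_rel _ Y y y0).
    - intros y u. exact (@qp_trans _ Y y y0). }
  pose proof (f_equal (fun f => f x tt) (H _ mu Hmu)) as E.
  change (compose (@qp_hom _ Y) phi x y0 = compose (@qp_hom _ Y) psi x y0) in E.
  rewrite !dist_left in E; assumption.
Qed.

Lemma dagger_eq :
  (forall (q : Q) (lam : QRelType (one q) X), inPd lam ->
        dagger_map phi lam = dagger_map psi lam) -> phi = psi.
Proof.
  intros H. apply rel_ext. intros x0 y.
  set (lam := (fun (_ : unit) x => @qp_hom _ X x0 x) : QRelType (one (qs_val x0)) X).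
  assert (Hl : inPd lam).
  { split. - intros u x. exact (@qp_hom_rel _ X x0 x).
    - intros u x. exact (@qp_trans _ X x0 x). }
  pose proof (f_equal (fun f => f tt y) (H _ lam Hl)) as E.
  change (compose phi (@qp_hom _ X) x0 y = compose psi (@qp_hom _ X) x0 y) in E.
  rewrite !dist_right in E; assumption.
Qed.

Lemma up_val (chi : QRelType X Y) (Hc : is_distributor chi) (x0 : X) (y : Y) :
  lift_left chi ((fun x (_ : unit) => @qp_hom _ X x x0) : QRelType X (one (qs_val x0)))
    tt y = chi x0 y.
Proof.
  apply qle_antisym.
  - unfold lift_left. apply qsup_least. intros v [lam [Hq [Hr ->]]].
    eapply qle_trans; [| apply (Hr x0 y)].
    destruct (Hq tt y) as [E _]. simpl in E. rewrite <- E at 1.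
    unfold compose. eapply sup_ge. exists tt. reflexivity.
    apply mul_mono_r, hom_diag.
  - unfold lift_left. eapply sup_ge.
    exists (fun (_ : unit) y => chi x0 y). split; [| split].
    + intros u y'. exact (proj1 Hc x0 y').
    + intros x y'. eapply qle_trans; [| rewrite <- (dist_right _ _ _ Hc x y'); apply qle_refl].
      unfold compose at 1. apply qsup_least. intros v [u ->].
      unfold compose. eapply sup_ge. exists x0. reflexivity. apply qle_refl.
    + reflexivity.
    + apply qle_refl.
Qed.

Lemma up_eq :
  (forall (q : Q) (mu : QRelType X (one q)), inP mu ->
        up_map phi mu = up_map psi mu) -> phi = psi.
Proof.
  intros H. apply rel_ext. intros x0 y.
  set (mu := (fun x (_ : unit) => @qp_hom _ X x x0) : QRelType X (one (qs_val x0))).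
  assert (Hmu : inP mu).
  { split. - intros x u. exact (@qp_hom_rel _ X x x0).
    - intros x u. exact (@qp_trans _ X x x0). }
  pose proof (f_equal (fun f => f tt y) (H _ mu Hmu)) as E.
  unfold up_map, mu in E. rewrite !up_val in E; assumption.
Qed.

Lemma down_val (chi : QRelType X Y) (Hc : is_distributor chi) (y0 : Y) (x : X) :
  lift_right ((fun (_ : unit) y => @qp_hom _ Y y0 y) : QRelType (one (qs_val y0)) Y)
    chi x tt = chi x y0.
Proof.
  apply qle_antisym.
  - unfold lift_right. apply qsup_least. intros v [mu [Hq [Hr ->]]].
    eapply qle_trans; [| apply (Hr x y0)].
    unfold compose. eapply sup_ge. exists tt. reflexivity.
    rewrite <- (qmul_e_l (mu x tt)) at 1. apply mul_mono_l.
    eapply qle_trans; [apply e_le_div| apply rdiv_mono, hom_diag].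
  - unfold lift_right. eapply sup_ge.
    exists (fun x (_ : unit) => chi x y0). split; [| split].
    + intros x' u. exact (proj1 Hc x' y0).
    + intros x' y'. eapply qle_trans; [| rewrite <- (dist_left _ _ _ Hc x' y'); apply qle_refl].
      unfold compose at 1. apply qsup_least. intros v [u ->].
      unfold compose. eapply sup_ge. exists y0. reflexivity. apply qle_refl.
    + reflexivity.
    + apply qle_refl.
Qed.

Lemma down_eq :
  (forall (q : Q) (lam : QRelType (one q) Y), inPd lam ->
        down_map phi lam = down_map psi lam) -> phi = psi.
Proof.
  intros H. apply rel_ext. intros x y0.
  set (lam := (fun (_ : unit) y => @qp_hom _ Y y0 y) : QRelType (one (qs_val y0)) Y).
  assert (Hl : inPd lam).
  { split. - intros u y. exact (@qp_hom_rel _ Y y0 y).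
    - intros u y. exact (@qp_trans _ Y y0 y). }
  pose proof (f_equal (fun f => f x tt) (H _ lam Hl)) as E.
  unfold down_map, lam in E. rewrite !down_val in E; assumption.
Qed.

End Fix.
End Aux.

Theorem proposition4p21 (Q : Quantale) (X Y : QPreSubset Q)
  (phi psi : QRelType X Y) :
  is_distributor phi -> is_distributor psi ->
  (phi = psi <->
     (forall (q : Q) (mu : QRelType X (one q)), inP mu ->
        up_map phi mu = up_map psi mu)) /\
  ((forall (q : Q) (mu : QRelType X (one q)), inP mu ->
        up_map phi mu = up_map psi mu) <->
     (forall (q : Q) (lam : QRelType (one q) Y), inPd lam ->
        down_map phi lam = down_map psi lam)) /\
  ((forall (q : Q) (lam : QRelType (one q) Y), inPd lam ->
        down_map phi lam = down_map psi lam) <->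
     (forall (q : Q) (mu : QRelType Y (one q)), inP mu ->
        star_map phi mu = star_map psi mu)) /\
  ((forall (q : Q) (mu : QRelType Y (one q)), inP mu ->
        star_map phi mu = star_map psi mu) <->
     (forall (q : Q) (lam : QRelType (one q) X), inPd lam ->
        dagger_map phi lam = dagger_map psi lam)).
Proof.
  intros Hphi Hpsi.
  pose proof (@up_eq _ _ _ _ _ Hphi Hpsi) as U.
  pose proof (@down_eq _ _ _ _ _ Hphi Hpsi) as D.
  pose proof (@star_eq _ _ _ _ _ Hphi Hpsi) as S.
  pose proof (@dagger_eq _ _ _ _ _ Hphi Hpsi) as G.
  repeat split; intros H;
    first [ subst psi; intros; reflexivity
          | apply U in H; subst psi; intros; reflexivity
          | apply D in H; subst psi; intros; reflexivity
          | apply S in H; subst psi; intros; reflexivity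
          | apply G in H; subst psi; intros; reflexivity ].
Qed.
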